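(* Let $r\in[0,\pi/2)$ and suppose $\mathscr A^r$ is invariant for (TVKR). For $i\ne j$ define $c^r_{ij}(t)=[a_{ij}(t)+a_{ji}(t)]\cos r$ if $a_{ij}(t)+a_{ji}(t)>0$ and $c^r_{ij}(t)=a_{ij}(t)+a_{ji}(t)$ otherwise; and $\tilde a^r_{ik}(t)=a_{ik}(t)\cos r$ if $a_{ik}(t)>0$ and $\tilde a^r_{ik}(t)=a_{ik}(t)$ otherwise. Define $$\xi(L(t),r)=-\min_{i\ne j}\Big\{c^r_{ij}(t)+\sum_{k\ne i,j}\min\big(\tilde a^r_{ik}(t),\tilde a^r_{jk}(t)\big)\Big\}.$$ If there exist $T>0$ and $\eta>0$ such that $\frac1T\int_t^{t+T}\xi(L(s),r)\,ds\le-\eta$ for all $t\ge 0$, then the PD trajectories of (TVKR) are exponentially asymptotically stable within $\mathscr A^r$.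
   Context: Consider $m\ge 2$ phase oscillators $\theta=(\theta_1,\dots,\theta_m)\in\mathbb R^m$ governed by (TVKR): $\dot\theta_i=\omega_i(t)+\sum_{j=1}^m a_{ij}(t)\sin(\theta_j-\theta_i)$, $i=1,\dots,m$, where $\omega_i$ and $a_{ij}$ are real-valued, piecewise continuous, bounded functions of $t\ge 0$ with $a_{ii}\equiv 0$; the $a_{ij}$ may be negative. $L(t)$ denotes the Laplacian with $l_{ij}=-a_{ij}$ ($i\ne j$), $l_{ii}=\sum_{j\ne i}a_{ij}$. Write $\theta_{ij}=\theta_i-\theta_j$. For $r\in[0,\pi/2)$, $\mathscr A^{r}=\{(\theta_{ij})_{i>j}: |\theta_{ij}|\le r \text{ for all } i>j\}$; $\mathscr A^r$ is invariant for (TVKR) if every solution whose phase differences lie in $\mathscr A^r$ at $t=0$ has phase differences in $\mathscr A^r$ for all $t\ge0$. The PD trajectories are exponentially asymptotically stable within $\mathscr A^r$ if there exist constants $M,T_0,\epsilon>0$ such that for any two solutions $\phi,\theta$ of (TVKR) whose initial phase differences lie in $\mathscr A^r$, $|\phi_{ij}(t)-\theta_{ij}(t)|\le M\max_{k,l}|\phi_{kl}(0)-\theta_{kl}(0)|e^{-\epsilon t}$ for all $t\ge T_0$ and all $i,j$. *)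

(* Defs.v *)
From Stdlib Require Import Reals Lra List.
Import ListNotations.
Open Scope R_scope.

Definition sumR (l : list R) : R := fold_right Rplus 0 l.
Definition listMin (l : list R) : R :=
  match l with nil => 0 | x :: t => fold_right Rmin x t end.
Definition listMax (l : list R) : R :=
  match l with nil => 0 | x :: t => fold_right Rmax x t end.

Definition offdiag_pairs (m : nat) : list (nat * nat) :=
  flat_map (fun i => map (fun j => (i, j))
              (filter (fun j => negb (Nat.eqb i j)) (seq 0 m))) (seq 0 m).

Definition all_pairs (m : nat) : list (nat * nat) :=
  flat_map (fun k => map (fun l => (k, l)) (seq 0 m)) (seq 0 m).

Definition piecewise_continuous (f : R -> R) : Prop :=
  forall T, 0 < T ->
  exists pts : list R,
    (forall t, 0 <= t <= T -> ~ In t pts -> continuity_pt f t) /\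
    (forall t, In t pts ->
       (0 <= t < T -> exists l, limit1_in f (fun x => t < x) l t) /\
       (0 < t <= T -> exists l, limit1_in f (fun x => x < t) l t)).

Definition bounded_on_nonneg (f : R -> R) : Prop :=
  exists B, forall t, 0 <= t -> Rabs (f t) <= B.

Definition tvkr_rhs (m : nat) (omega : nat -> R -> R) (a : nat -> nat -> R -> R)
  (theta : nat -> R -> R) (i : nat) (s : R) : R :=
  omega i s + sumR (map (fun j => a i j s * sin (theta j s - theta i s)) (seq 0 m)).

(** theta is a (Caratheodory) solution of (TVKR) on [0,+oo):
    theta_i(t) = theta_i(0) + \int_0^t rhs_i(s) ds for all t >= 0, i < m. *)
Definition is_solution (m : nat) (omega : nat -> R -> R) (a : nat -> nat -> R -> R)
  (theta : nat -> R -> R) : Prop :=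
  forall i, (i < m)%nat -> forall t, 0 <= t ->
    exists pr : Riemann_integrable (tvkr_rhs m omega a theta i) 0 t,
      theta i t = theta i 0 + RiemannInt pr.

Definition PD_in (m : nat) (r : R) (theta : nat -> R -> R) (t : R) : Prop :=
  forall i j, (j < i < m)%nat -> Rabs (theta i t - theta j t) <= r.

Definition invariant_Ar (m : nat) (omega : nat -> R -> R) (a : nat -> nat -> R -> R)
  (r : R) : Prop :=
  forall theta, is_solution m omega a theta -> PD_in m r theta 0 ->
    forall t, 0 <= t -> PD_in m r theta t.

Definition init_PD_dist (m : nat) (phi theta : nat -> R -> R) : R :=
  listMax (map (fun p : nat * nat =>
     Rabs ((phi (fst p) 0 - phi (snd p) 0) - (theta (fst p) 0 - theta (snd p) 0)))
     (all_pairs m)).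

Definition PD_exp_stable (m : nat) (omega : nat -> R -> R) (a : nat -> nat -> R -> R)
  (r : R) : Prop :=
  exists M T0 eps, 0 < M /\ 0 < T0 /\ 0 < eps /\
    forall phi theta,
      is_solution m omega a phi -> is_solution m omega a theta ->
      PD_in m r phi 0 -> PD_in m r theta 0 ->
      forall t, T0 <= t -> forall i j, (i < m)%nat -> (j < m)%nat ->
        Rabs ((phi i t - phi j t) - (theta i t - theta j t))
          <= M * init_PD_dist m phi theta * exp (- eps * t).

Definition c_r (a : nat -> nat -> R -> R) (r : R) (i j : nat) (t : R) : R :=
  let s := a i j t + a j i t in
  if Rlt_dec 0 s then s * cos r else s.

Definition atilde_r (a : nat -> nat -> R -> R) (r : R) (i k : nat) (t : R) : R :=
  if Rlt_dec 0 (a i k t) then a i k t * cos r else a i k t.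

Definition xi (m : nat) (a : nat -> nat -> R -> R) (r : R) (t : R) : R :=
  - listMin (map (fun p : nat * nat =>
      let i := fst p in let j := snd p in
      c_r a r i j t +
      sumR (map (fun k => Rmin (atilde_r a r i k t) (atilde_r a r j k t))
              (filter (fun k => andb (negb (Nat.eqb k i)) (negb (Nat.eqb k j))) (seq 0 m))))
    (offdiag_pairs m)).

(* Main.v *)
Require Import Defs.
From Stdlib Require Import Reals Lra List ClassicalEpsilon Arith Lia.
Import ListNotations.
Open Scope R_scope.

Lemma exp_ge_1x (x : R) : 1 + x <= exp x.
Proof. destruct (Req_dec x 0) as [->|H]. rewrite exp_0; lra. left; apply exp_ineq1; auto. Qed.

Lemma exp_mono (x y : R) : x <= y -> exp x <= exp y.
Proof. intros [H|H]. left; apply exp_increasing; auto. subst; lra. Qed.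

Lemma fold_max_ge (t : list R) (x : R) : x <= fold_right Rmax x t /\ forall y, In y t -> y <= fold_right Rmax x t.
Proof. induction t as [|z t IH]; simpl. split; [lra| tauto].
 destruct IH as [H1 H2]. split. eapply Rle_trans; [apply H1| apply Rmax_r].
 intros y [<-|Hy]. apply Rmax_l. eapply Rle_trans; [apply H2; auto| apply Rmax_r]. Qed.

Lemma fold_max_in (t : list R) (x : R) : In (fold_right Rmax x t) (x :: t).
Proof. induction t as [|z t IH]; simpl. auto.
 destruct (Rle_dec z (fold_right Rmax x t)).
 rewrite Rmax_right; auto. destruct IH as [H|H]; auto. rewrite Rmax_left; auto. lra. Qed.

Lemma listMax_ge (l : list R) y : In y l -> y <= listMax l.
Proof. destruct l as [|x t]; simpl. tauto. intros [<-|H]. apply (proj1 (fold_max_ge t x)). apply (proj2 (fold_max_ge t x)); auto. Qed.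

Lemma listMax_in (l : list R) : l <> [] -> In (listMax l) l.
Proof. destruct l as [|x t]; simpl. tauto. intros _; apply fold_max_in. Qed.

Lemma fold_min_le (t : list R) (x : R) : fold_right Rmin x t <= x /\ forall y, In y t -> fold_right Rmin x t <= y.
Proof. induction t as [|z t IH]; simpl. split; [lra| tauto].
 destruct IH as [H1 H2]. split. eapply Rle_trans; [apply Rmin_r|apply H1].
 intros y [<-|Hy]. apply Rmin_l. eapply Rle_trans; [apply Rmin_r| apply H2; auto]. Qed.

Lemma fold_min_in (t : list R) (x : R) : In (fold_right Rmin x t) (x :: t).
Proof. induction t as [|z t IH]; simpl. auto.
 destruct (Rle_dec z (fold_right Rmin x t)).
 rewrite Rmin_left; auto. rewrite Rmin_right; [|lra]. destruct IH as [H|H]; auto. Qed.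

Lemma listMin_le (l : list R) y : In y l -> listMin l <= y.
Proof. destruct l as [|x t]; simpl. tauto. intros [<-|H]. apply (proj1 (fold_min_le t x)). apply (proj2 (fold_min_le t x)); auto. Qed.

Lemma listMin_in (l : list R) : l <> [] -> In (listMin l) l.
Proof. destruct l as [|x t]; simpl. tauto. intros _; apply fold_min_in. Qed.

Lemma sumR_sub {A} (f g : A -> R) l : sumR (map f l) - sumR (map g l) = sumR (map (fun x => f x - g x) l).
Proof. induction l; simpl; [lra|]. rewrite <- IHl; lra. Qed.

Lemma sumR_le {A} (f g : A -> R) l : (forall x, In x l -> f x <= g x) -> sumR (map f l) <= sumR (map g l).
Proof. induction l; simpl; intros H; [lra|]. apply Rplus_le_compat; auto. Qed.

Lemma sumR_const {A} (c : R) (l : list A) : sumR (map (fun _ => c) l) = INR (length l) * c.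
Proof. induction l; simpl length; rewrite ?S_INR; simpl; [lra|]. rewrite IHl; lra. Qed.

Lemma sumR_abs {A} (f : A -> R) l c : (forall x, In x l -> Rabs (f x) <= c) -> Rabs (sumR (map f l)) <= INR (length l) * c.
Proof. induction l; simpl length; rewrite ?S_INR; simpl; intros H. rewrite Rabs_R0; lra.
 eapply Rle_trans. apply Rabs_triang. assert (Rabs (f a) <= c) by auto.
 assert (Rabs (sumR (map f l)) <= INR (length l) * c) by auto. lra. Qed.

Lemma sumR_ext {A} (f g : A -> R) l : (forall x, In x l -> f x = g x) -> sumR (map f l) = sumR (map g l).
Proof. induction l; simpl; intros H; auto. rewrite H, IHl; auto. Qed.

Lemma sumR_split1 (F : nat -> R) (l : list nat) i : NoDup l -> In i l ->
  sumR (map F l) = F i + sumR (map F (filter (fun k => negb (Nat.eqb k i)) l)).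
Proof. induction l as [|x l IH]; simpl. tauto. intros Hnd Hin. inversion Hnd; subst.
 destruct (Nat.eqb_spec x i) as [->|Hne]; simpl.
 - f_equal. f_equal. f_equal. symmetry. apply forallb_filter_id. apply forallb_forall.
   intros y Hy. destruct (Nat.eqb_spec y i); subst; [tauto|reflexivity].
 - destruct Hin as [->|Hin]; [tauto|]. rewrite IH; auto. lra. Qed.

Lemma Rabs_le_inv (a b : R) : Rabs a <= b -> - b <= a <= b.
Proof. unfold Rabs; destruct Rcase_abs; lra. Qed.

Lemma filter_filter' {A} (p q : A -> bool) l : filter p (filter q l) = filter (fun x => andb (q x) (p x)) l.
Proof. induction l; simpl; auto. destruct (q a); simpl; [destruct (p a); simpl; [f_equal|]|]; auto. Qed.

Lemma sumR_split2 (F : nat -> R) m i j : (i < m)%nat -> (j < m)%nat -> i <> j ->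
  sumR (map F (seq 0 m)) = F i + F j +
   sumR (map F (filter (fun k => andb (negb (Nat.eqb k i)) (negb (Nat.eqb k j))) (seq 0 m))).
Proof. intros Hi Hj Hij. rewrite (sumR_split1 F _ i); [| apply seq_NoDup| apply in_seq; lia].
 rewrite (sumR_split1 F _ j). rewrite filter_filter'. lra.
 apply NoDup_filter, seq_NoDup. apply filter_In; split. apply in_seq; lia.
 destruct (Nat.eqb_spec j i); subst; tauto. Qed.

Lemma one_term (cr c A Bd e eps : R) : 0 <= cr <= c -> c <= 1 -> Rabs A <= Bd -> e <= eps -> 0 <= eps ->
  A * c * e <= (if Rlt_dec 0 A then A * cr else A) * e + Bd * eps.
Proof. intros [H0 H1] H2 HA He Heps. apply Rabs_le_inv in HA.
 destruct (Rlt_dec 0 A) as [Hp|Hp].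
 - assert (0 <= Bd * eps) by nra. destruct (Rle_dec e 0).
   assert (0 <= A*(c-cr)) by nra. assert (A*(c-cr)*e <= 0) by nra. nra.
   assert (0 <= A*e) by nra. assert (A*e*(1-c) >= 0) by nra. assert (A*(1-cr)*e <= Bd*eps). { apply Rmult_le_compat; nra. } nra.
 - assert (0 <= Bd * eps) by nra. destruct (Rle_dec e 0).
   assert (0 <= A*e) by nra. assert (A*e*(1-c) >= 0) by nra. lra.
   assert (0 <= -A*(1-c)) by nra. assert (-A*(1-c) <= Bd) by nra.
   assert (-A*(1-c)*e <= Bd * eps) by (apply Rmult_le_compat; lra). nra. Qed.

Lemma atil_bound A cr B : 0 <= cr <= 1 -> Rabs A <= B -> Rabs (if Rlt_dec 0 A then A * cr else A) <= B.
Proof. intros Hc HA. destruct Rlt_dec; auto. rewrite Rabs_mult, (Rabs_right cr) by lra. pose proof (Rabs_pos A). nra. Qed.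

Lemma min_term a1 a2 x y B eps : Rabs a1 <= B -> Rabs a2 <= B -> -eps <= x -> -eps <= y -> 0 <= eps ->
  - a1 * x - a2 * y <= - Rmin a1 a2 * (x + y) + 2 * B * eps.
Proof. intros H1 H2 Hx Hy He. apply Rabs_le_inv in H1. apply Rabs_le_inv in H2.
 unfold Rmin; destruct Rle_dec.
 assert ((a1 - a2) * y <= (a2 - a1) * eps) by nra. nra.
 assert ((a2 - a1) * x <= (a1 - a2) * eps) by nra. nra. Qed.

Lemma sin_mvt x y r : 0 <= r < PI / 2 -> Rabs x <= r -> Rabs y <= r ->
  exists c, cos r <= c <= 1 /\ sin x - sin y = c * (x - y).
Proof. intros Hr Hx Hy. apply Rabs_le_inv in Hx; apply Rabs_le_inv in Hy.
 assert (Hc : forall z, Rabs z <= r -> cos r <= cos z <= 1).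
 { intros z Hz. split; [|apply COS_bound].
   assert (Hpi := PI_RGT_0).
   destruct (Rle_dec 0 z).
   - rewrite Rabs_right in Hz by lra. destruct (Req_dec z r). subst; lra.
     left; apply cos_decreasing_1; lra.
   - rewrite Rabs_left in Hz by lra. rewrite <- (cos_neg z). destruct (Req_dec (-z) r). rewrite H; lra.
     left; apply cos_decreasing_1; lra. }
 destruct (Req_dec x y) as [->|Hne]. exists 1. split; [|ring]. split; [|lra]. apply COS_bound.
 destruct (Rlt_dec y x).
 - destruct (MVT_cor2 sin cos y x) as [c [E Hc']]; auto. intros; apply derivable_pt_lim_sin.
   exists (cos c); split; auto. apply Hc. apply Rabs_le; lra.
 - destruct (MVT_cor2 sin cos x y) as [c [E Hc']]; [lra| intros; apply derivable_pt_lim_sin|].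
   exists (cos c); split. apply Hc. apply Rabs_le; lra. lra. Qed.

Definition Vf (m : nat) (a : nat -> nat -> R -> R) (r t : R) (p : nat * nat) : R :=
  let i := fst p in let j := snd p in
      c_r a r i j t +
      sumR (map (fun k => Rmin (atilde_r a r i k t) (atilde_r a r j k t))
              (filter (fun k => andb (negb (Nat.eqb k i)) (negb (Nat.eqb k j))) (seq 0 m))).

Lemma xi_Vf m a r t : xi m a r t = - listMin (map (Vf m a r t) (offdiag_pairs m)).
Proof. reflexivity. Qed.

Lemma sumR_lin {A} (g : A -> R) u c l :
  sumR (map (fun k => - g k * u + c) l) = - sumR (map g l) * u + INR (length l) * c.
Proof. induction l; simpl length; rewrite ?S_INR; simpl; [lra|]. rewrite IHl; ring. Qed.

Lemma length_filter_seq (p : nat -> bool) m : INR (length (filter p (seq 0 m))) <= INR m.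
Proof. apply le_INR. eapply Nat.le_trans. apply filter_length_le. rewrite length_seq; lia. Qed.

Lemma in_offdiag m i j : (i < m)%nat -> (j < m)%nat -> i <> j -> In (i, j) (offdiag_pairs m).
Proof. intros. unfold offdiag_pairs. apply in_flat_map. exists i. split. apply in_seq; lia.
 apply in_map. apply filter_In. split. apply in_seq; lia. destruct (Nat.eqb_spec i j); tauto. Qed.

Lemma in_offdiag_inv m p : In p (offdiag_pairs m) -> (fst p < m)%nat /\ (snd p < m)%nat.
Proof. unfold offdiag_pairs. intros H. apply in_flat_map in H. destruct H as [i [Hi H]].
 apply in_map_iff in H. destruct H as [j [<- Hj]]. apply filter_In in Hj. destruct Hj as [Hj _].
 apply in_seq in Hi; apply in_seq in Hj. simpl; lia. Qed.

Lemma Vf_bound m a r t B : 0 <= r < PI / 2 -> 0 <= B ->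
  (forall k l, (k < m)%nat -> (l < m)%nat -> Rabs (a k l t) <= B) ->
  forall p, In p (offdiag_pairs m) -> Rabs (Vf m a r t p) <= 2 * B + B * INR m.
Proof. intros Hr HB Ha p Hp. destruct (in_offdiag_inv m p Hp) as [Hi Hj].
 assert (Hc : 0 <= cos r <= 1). { split. apply cos_ge_0; pose proof PI_RGT_0; lra. apply COS_bound. }
 unfold Vf. eapply Rle_trans. apply Rabs_triang. apply Rplus_le_compat.
 - unfold c_r. apply atil_bound; auto. eapply Rle_trans. apply Rabs_triang.
   pose proof (Ha _ _ Hi Hj); pose proof (Ha _ _ Hj Hi); lra.
 - eapply Rle_trans. apply sumR_abs with (c := B).
   intros k Hk. apply filter_In in Hk. destruct Hk as [Hk _]. apply in_seq in Hk.
   assert (Rabs (atilde_r a r (fst p) k t) <= B) by (apply atil_bound; auto; apply Ha; lia).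
   assert (Rabs (atilde_r a r (snd p) k t) <= B) by (apply atil_bound; auto; apply Ha; lia).
   apply Rabs_le_inv in H; apply Rabs_le_inv in H0. apply Rabs_le. unfold Rmin; destruct Rle_dec; lra.
   rewrite Rmult_comm. apply Rmult_le_compat_l; auto. apply length_filter_seq. Qed.

Lemma listMin_bound (l : list R) X : 0 <= X -> (forall x, In x l -> Rabs x <= X) -> Rabs (listMin l) <= X.
Proof. intros HX H. destruct l as [|x t]. simpl. rewrite Rabs_R0; auto.
 apply H. apply listMin_in. discriminate. Qed.

Lemma xi_bound m a r t B : 0 <= r < PI / 2 -> 0 <= B ->
  (forall k l, (k < m)%nat -> (l < m)%nat -> Rabs (a k l t) <= B) ->
  Rabs (xi m a r t) <= 2 * B + B * INR m.
Proof. intros. rewrite xi_Vf, Rabs_Ropp. apply listMin_bound. pose proof (pos_INR m); nra.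
 intros x Hx. apply in_map_iff in Hx. destruct Hx as [p [<- Hp]]. apply Vf_bound; auto. Qed.

Definition Kc (m : nat) (B : R) : R := 2 * B + 4 * B * INR m + 2 * (2 * B + B * INR m).

Lemma pointwise (m : nat) (omega : nat -> R -> R) (a : nat -> nat -> R -> R) (r B : R)
  (phi theta : nat -> R -> R) (s eps : R) (i j : nat) :
  0 <= r < PI / 2 -> 0 <= B ->
  (forall k l, (k < m)%nat -> (l < m)%nat -> Rabs (a k l s) <= B) ->
  (forall k, (k < m)%nat -> a k k s = 0) ->
  (forall k l, (k < m)%nat -> (l < m)%nat -> Rabs (phi k s - phi l s) <= r) ->
  (forall k l, (k < m)%nat -> (l < m)%nat -> Rabs (theta k s - theta l s) <= r) ->
  (i < m)%nat -> (j < m)%nat -> i <> j -> 0 <= eps ->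
  (forall k, (k < m)%nat -> (phi k s - theta k s) - (phi i s - theta i s) <= eps) ->
  (forall k, (k < m)%nat -> (phi j s - theta j s) - (phi k s - theta k s) <= eps) ->
  (tvkr_rhs m omega a phi i s - tvkr_rhs m omega a theta i s)
   - (tvkr_rhs m omega a phi j s - tvkr_rhs m omega a theta j s)
   <= xi m a r s * ((phi i s - theta i s) - (phi j s - theta j s)) + Kc m B * eps.
Proof.
 intros Hr HB Ha Hd Hp Ht Hi Hj Hij He Hmax Hmin.
 assert (Hc : 0 <= cos r <= 1). { split. apply cos_ge_0; pose proof PI_RGT_0; lra. apply COS_bound. }
 set (F := fun k => a i k s * (sin (phi k s - phi i s) - sin (theta k s - theta i s))
                    - a j k s * (sin (phi k s - phi j s) - sin (theta k s - theta j s))).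
 assert (E : (tvkr_rhs m omega a phi i s - tvkr_rhs m omega a theta i s)
   - (tvkr_rhs m omega a phi j s - tvkr_rhs m omega a theta j s) = sumR (map F (seq 0 m))).
 { unfold tvkr_rhs.
   match goal with |- ?w1 + ?S1 - (?w1 + ?S2) - (?w2 + ?S3 - (?w2 + ?S4)) = _ =>
     replace (w1 + S1 - (w1 + S2) - (w2 + S3 - (w2 + S4))) with ((S1 - S2) - (S3 - S4)) by ring end.
   rewrite !sumR_sub. apply sumR_ext. intros k _. unfold F. ring. }
 rewrite E, (sumR_split2 F m i j Hi Hj Hij). clear E.
 set (u := (phi i s - theta i s) - (phi j s - theta j s)).
 destruct (sin_mvt (phi j s - phi i s) (theta j s - theta i s) r Hr) as [c0 [Hc0 E0]]; auto.
 assert (Hpair : F i + F j = (a i j s + a j i s) * c0 * (- u)).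
 { unfold F. rewrite !Hd by auto. replace (phi i s - phi i s) with 0 by ring.
   replace (theta i s - theta i s) with 0 by ring. replace (phi j s - phi j s) with 0 by ring.
   replace (theta j s - theta j s) with 0 by ring.
   replace (phi i s - phi j s) with (- (phi j s - phi i s)) by ring.
   replace (theta i s - theta j s) with (- (theta j s - theta i s)) by ring.
   rewrite !sin_neg. unfold u.
   replace (sin (phi j s - phi i s) - sin (theta j s - theta i s)) with (- (- sin (phi j s - phi i s) - - sin (theta j s - theta i s))) in E0 by ring.
   nra. }
 assert (Hpb : F i + F j <= c_r a r i j s * (- u) + (2 * B) * eps).
 { rewrite Hpair. unfold c_r. cbv zeta. apply one_term; try lra.
   eapply Rle_trans. apply Rabs_triang. pose proof (Ha _ _ Hi Hj); pose proof (Ha _ _ Hj Hi); lra.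
   unfold u. pose proof (Hmax j Hj). lra. }
 set (fl := filter (fun k => andb (negb (Nat.eqb k i)) (negb (Nat.eqb k j))) (seq 0 m)).
 assert (Hoth : sumR (map F fl) <=
   sumR (map (fun k => - Rmin (atilde_r a r i k s) (atilde_r a r j k s) * u + 4 * B * eps) fl)).
 { apply sumR_le. intros k Hk. unfold fl in Hk. apply filter_In in Hk. destruct Hk as [Hk _].
   apply in_seq in Hk. assert (Hkm : (k < m)%nat) by lia.
   destruct (sin_mvt (phi k s - phi i s) (theta k s - theta i s) r Hr) as [c1 [Hc1 E1]]; auto.
   destruct (sin_mvt (phi k s - phi j s) (theta k s - theta j s) r Hr) as [c2 [Hc2 E2]]; auto.
   unfold F. rewrite E1, E2.
   assert (T1 : a i k s * c1 * ((phi k s - theta k s) - (phi i s - theta i s)) <=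
            atilde_r a r i k s * ((phi k s - theta k s) - (phi i s - theta i s)) + B * eps).
   { unfold atilde_r. apply one_term; try lra. auto. apply Hmax; auto. }
   assert (T2 : a j k s * c2 * ((phi j s - theta j s) - (phi k s - theta k s)) <=
            atilde_r a r j k s * ((phi j s - theta j s) - (phi k s - theta k s)) + B * eps).
   { unfold atilde_r. apply one_term; try lra. auto. apply Hmin; auto. }
   assert (T3 := min_term (atilde_r a r i k s) (atilde_r a r j k s)
                 ((phi i s - theta i s) - (phi k s - theta k s))
                 ((phi k s - theta k s) - (phi j s - theta j s)) B eps).
   assert (Rabs (atilde_r a r i k s) <= B) by (apply atil_bound; auto).
   assert (Rabs (atilde_r a r j k s) <= B) by (apply atil_bound; auto).
   pose proof (Hmax k Hkm). pose proof (Hmin k Hkm).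
   specialize (T3 H H0 ltac:(lra) ltac:(lra) He).
   unfold u.
   replace (phi k s - phi i s - (theta k s - theta i s)) with ((phi k s - theta k s) - (phi i s - theta i s)) by ring.
   replace (phi k s - phi j s - (theta k s - theta j s)) with (- ((phi j s - theta j s) - (phi k s - theta k s))) by ring.
   replace (phi i s - theta i s - (phi j s - theta j s)) with
     (((phi i s - theta i s) - (phi k s - theta k s)) + ((phi k s - theta k s) - (phi j s - theta j s))) by ring.
   lra. }
 rewrite sumR_lin in Hoth.
 assert (Hlen := length_filter_seq (fun k => andb (negb (Nat.eqb k i)) (negb (Nat.eqb k j))) m).
 fold fl in Hlen.
 assert (Hstep : F i + F j + sumR (map F fl) <= - Vf m a r s (i, j) * u + (2 * B + 4 * B * INR m) * eps).
 { unfold Vf; simpl fst; simpl snd. fold fl.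
   assert (INR (length fl) * (4 * B * eps) <= INR m * (4 * B * eps)).
   { apply Rmult_le_compat_r; auto. nra. } lra. }
 assert (Hin : In (Vf m a r s (i, j)) (map (Vf m a r s) (offdiag_pairs m))).
 { apply in_map. apply in_offdiag; auto. }
 assert (Hlm := listMin_le _ _ Hin).
 assert (HV := Vf_bound m a r s B Hr HB Ha (i, j) (in_offdiag m i j Hi Hj Hij)).
 assert (HL : Rabs (listMin (map (Vf m a r s) (offdiag_pairs m))) <= 2 * B + B * INR m).
 { apply listMin_bound. pose proof (pos_INR m); nra. intros x Hx. apply in_map_iff in Hx.
   destruct Hx as [p [<- Hp0]]. apply Vf_bound; auto. }
 rewrite xi_Vf. apply Rabs_le_inv in HV; apply Rabs_le_inv in HL.
 assert (Hu : - eps <= u) by (unfold u; pose proof (Hmax j Hj); lra).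
 set (w := Vf m a r s (i, j) - listMin (map (Vf m a r s) (offdiag_pairs m))) in *.
 assert (- w * u <= 2 * (2 * B + B * INR m) * eps).
 { assert (0 <= w) by (unfold w; lra). assert (w <= 2 * (2 * B + B * INR m)) by (unfold w; lra). nra. }
 unfold Kc. unfold w in H. nra.
Qed.

Lemma comparison (D Phi : R -> R) (X C t : R) :
  0 <= X -> 0 <= C -> 0 <= t ->
  (forall s, 0 <= s -> 0 <= D s) ->
  (forall a b, 0 <= a <= b -> Phi b - Phi a <= X * (b - a)) ->
  (forall a b, 0 <= a <= b -> 0 < D b -> D b <= D a + D a * (Phi b - Phi a) + C * ((b - a) * (b - a))) ->
  D t <= D 0 * exp (Phi t - Phi 0).
Proof.
 intros HX HC Ht HD HPhi Hstep.
 assert (Hclaim : forall h, 0 <= h -> forall k : nat,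
   D (INR k * h) <= D 0 * exp (Phi (INR k * h) - Phi 0) + INR k * C * (h * h) * exp (X * (INR k * h))).
 { intros h Hh k. induction k as [|k IH].
   - simpl. rewrite Rmult_0_l, Rminus_diag, exp_0. lra.
   - rewrite S_INR. set (a := INR k * h) in *. replace ((INR k + 1) * h) with (a + h) by (unfold a; ring).
     assert (Ha : 0 <= a) by (unfold a; pose proof (pos_INR k); nra).
     assert (E0 : 0 <= D 0) by (apply HD; lra).
     assert (0 <= D 0 * exp (Phi (a + h) - Phi 0)) by (pose proof (exp_pos (Phi (a+h) - Phi 0)); nra).
     assert (0 <= (INR k + 1) * C * (h * h) * exp (X * (a + h))).
     { pose proof (pos_INR k). pose proof (exp_pos (X * (a + h))). assert (0 <= h*h) by nra.
       apply Rmult_le_pos; auto. apply Rmult_le_pos; auto. apply Rmult_le_pos; lra. lra. }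
     destruct (Rle_dec (D (a + h)) 0) as [Hle|Hgt]. lra.
     assert (S1 := Hstep a (a + h) ltac:(lra) ltac:(lra)). replace (a + h - a) with h in S1 by ring.
     set (G := Phi (a + h) - Phi a) in *.
     assert (HG : G <= X * h) by (unfold G; replace h with (a + h - a) at 2 by ring; apply HPhi; lra).
     assert (HDa : 0 <= D a) by (apply HD; auto).
     assert (S2 : D a + D a * G <= D a * exp G) by (pose proof (exp_ge_1x G); nra).
     set (Ek := INR k * C * (h * h)) in *.
     assert (HEk : 0 <= Ek) by (unfold Ek; pose proof (pos_INR k); assert (0 <= h*h) by nra;
        apply Rmult_le_pos; auto; apply Rmult_le_pos; auto).
     assert (S3 : D a * exp G <= (D 0 * exp (Phi a - Phi 0) + Ek * exp (X * a)) * exp G)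
       by (apply Rmult_le_compat_r; [left; apply exp_pos| auto]).
     assert (S4 : exp (Phi a - Phi 0) * exp G = exp (Phi (a + h) - Phi 0)).
     { rewrite <- exp_plus. f_equal. unfold G; ring. }
     assert (S5 : exp (X * a) * exp G <= exp (X * (a + h))).
     { rewrite <- exp_plus. apply exp_mono. nra. }
     assert (S6 : 1 <= exp (X * (a + h))).
     { pose proof (exp_ge_1x (X * (a + h))). assert (0 <= X * (a + h)) by nra. lra. }
     assert (Ek * (exp (X * a) * exp G) <= Ek * exp (X * (a + h))) by (apply Rmult_le_compat_l; auto).
     assert (C * (h * h) <= C * (h * h) * exp (X * (a + h))).
     { assert (0 <= C * (h*h)) by (apply Rmult_le_pos; nra). nra. }
     replace ((INR k + 1) * C * (h * h) * exp (X * (a + h))) with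
       (Ek * exp (X * (a + h)) + C * (h * h) * exp (X * (a + h))) by (unfold Ek; ring).
     rewrite <- S4. nra. }
 destruct (Rle_dec (D t) (D 0 * exp (Phi t - Phi 0))) as [H|H]; auto. exfalso.
 set (A := C * (t * t) * exp (X * t)).
 destruct (INR_archimed (D t - D 0 * exp (Phi t - Phi 0)) A) as [n Hn]. lra.
 destruct n as [|n']. { simpl in Hn. assert (0 <= A) by (unfold A; pose proof (exp_pos (X*t)); assert (0<=t*t) by nra; apply Rmult_le_pos; [apply Rmult_le_pos|]; lra). lra. }
 set (n := S n') in *. assert (Hn0 : 0 < INR n) by (apply lt_0_INR; unfold n; lia).
 set (h := t / INR n).
 assert (Hh : 0 <= h) by (unfold h, Rdiv; apply Rmult_le_pos; [lra| left; apply Rinv_0_lt_compat; lra]).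
 specialize (Hclaim h Hh n). replace (INR n * h) with t in Hclaim by (unfold h; field; lra).
 assert (INR n * (INR n * C * (h * h) * exp (X * t)) = A) by (unfold A, h; field; lra).
 assert (INR n * (D t - D 0 * exp (Phi t - Phi 0)) <= INR n * (INR n * C * (h * h) * exp (X * t))).
 { apply Rmult_le_compat_l; lra. } lra.
Qed.

Lemma finite_bound (n : nat) (P : nat -> R -> Prop) :
  (forall i B B', P i B -> B <= B' -> P i B') -> (forall i, (i < n)%nat -> exists B, P i B) ->
  exists B, 0 <= B /\ forall i, (i < n)%nat -> P i B.
Proof. intros Hm. induction n as [|n IH]; intros H.
 - exists 0; split; [lra| intros; lia].
 - destruct IH as [B1 [HB1 H1]]. intros i Hi; apply H; lia.
   destruct (H n ltac:(lia)) as [B2 H2]. exists (Rmax B1 B2). split. eapply Rle_trans; [apply HB1| apply Rmax_l].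
   intros i Hi. destruct (Nat.eq_dec i n) as [->|Hne]. eapply Hm; [apply H2| apply Rmax_r].
   eapply Hm; [apply H1; lia| apply Rmax_l]. Qed.

Lemma RI_transport f a b b' : Riemann_integrable f a b -> b = b' -> Riemann_integrable f a b'.
Proof. intros H E; rewrite <- E; exact H. Qed.

Lemma RI_0n f T : (forall t, 0 <= t -> Riemann_integrable f t (t + T)) -> 0 < T ->
  forall n : nat, Riemann_integrable f 0 (INR n * T).
Proof. intros HW HT n. induction n as [|n IH].
 - simpl. apply (RI_transport f 0 0). apply (@RiemannInt_P22 f 0 (0 + T) 0). apply HW; lra. split; lra. ring.
 - apply (RI_transport f 0 (INR n * T + T)). apply (@RiemannInt_P24 f 0 (INR n * T)). exact IH.
   apply HW. pose proof (pos_INR n); nra. rewrite S_INR; ring. Qed.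

Lemma RI_all f T : (forall t, 0 <= t -> Riemann_integrable f t (t + T)) -> 0 < T ->
  forall a b, 0 <= a <= b -> Riemann_integrable f a b.
Proof. intros HW HT a b Hab.
 destruct (constructive_indefinite_description _ (INR_archimed T b ltac:(lra))) as [n Hn].
 apply (@RiemannInt_P23 f 0 b a). apply (@RiemannInt_P22 f 0 (INR n * T) b). apply RI_0n; auto.
 split; lra. lra. Qed.

Lemma RI_ext_eq f a b b' (pr1 : Riemann_integrable f a b) (pr2 : Riemann_integrable f a b') :
  b = b' -> RiemannInt pr1 = RiemannInt pr2.
Proof. intros E; subst; apply RiemannInt_P5. Qed.

Lemma Phi_exists f T : (forall t, 0 <= t -> Riemann_integrable f t (t + T)) -> 0 < T ->
  exists Phi : R -> R, forall a b, 0 <= a <= b -> forall pr : Riemann_integrable f a b,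
     Phi b - Phi a = RiemannInt pr.
Proof. intros HW HT.
 pose (Phi := fun x => RiemannInt (RI_all f T HW HT 0 (Rmax x 0) (conj (Rle_refl 0) (Rmax_r x 0)))).
 assert (HP : forall x, 0 <= x -> forall pr : Riemann_integrable f 0 x, Phi x = RiemannInt pr).
 { intros x Hx pr. unfold Phi. apply RI_ext_eq. apply Rmax_left; lra. }
 exists Phi. intros a b Hab pr.
 set (prb := RI_all f T HW HT 0 b ltac:(lra)).
 set (pra := @RiemannInt_P22 f 0 b a prb ltac:(lra)).
 rewrite (HP b ltac:(lra) prb), (HP a ltac:(lra) pra).
 rewrite <- (RiemannInt_P26 pra pr prb). ring. Qed.

Lemma sol_diff m omega a phi i : is_solution m omega a phi -> (i < m)%nat ->
  forall x y, 0 <= x <= y -> exists pr : Riemann_integrable (tvkr_rhs m omega a phi i) x y,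
   phi i y - phi i x = RiemannInt pr.
Proof. intros Hs Hi x y Hxy. destruct (Hs i Hi y ltac:(lra)) as [prb Eb].
 destruct (Hs i Hi x ltac:(lra)) as [pra Ea].
 exists (@RiemannInt_P23 _ 0 y x prb ltac:(lra)).
 rewrite Eb, Ea. rewrite <- (RiemannInt_P26 pra (@RiemannInt_P23 _ 0 y x prb ltac:(lra)) prb). ring. Qed.

Lemma int_le_const f a b c (pr : Riemann_integrable f a b) : a <= b -> (forall s, a < s < b -> f s <= c) ->
  RiemannInt pr <= c * (b - a).
Proof. intros Hab H. rewrite <- (RiemannInt_P15 (RiemannInt_P14 a b c)).
 apply RiemannInt_P19; auto. Qed.

Lemma int_ge_const f a b c (pr : Riemann_integrable f a b) : a <= b -> (forall s, a < s < b -> c <= f s) ->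
  c * (b - a) <= RiemannInt pr.
Proof. intros Hab H. rewrite <- (RiemannInt_P15 (RiemannInt_P14 a b c)).
 apply RiemannInt_P19; auto. Qed.

Lemma int_abs_const f a b c (pr : Riemann_integrable f a b) : a <= b -> (forall s, a < s < b -> Rabs (f s) <= c) ->
  Rabs (RiemannInt pr) <= c * (b - a).
Proof. intros Hab H. apply Rabs_le. split.
 replace (- (c * (b - a))) with ((- c) * (b - a)) by ring. apply int_ge_const; auto.
 intros s Hs; pose proof (Rabs_le_inv _ _ (H s Hs)); lra.
 apply int_le_const; auto. intros s Hs; pose proof (Rabs_le_inv _ _ (H s Hs)); lra. Qed.

Definition uu (phi theta : nat -> R -> R) (i j : nat) (t : R) : R :=
  (phi i t - phi j t) - (theta i t - theta j t).

Definition gg m omega a (phi theta : nat -> R -> R) (i j : nat) : R -> R :=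
  fun s => (tvkr_rhs m omega a phi i s + -1 * tvkr_rhs m omega a theta i s)
         + -1 * (tvkr_rhs m omega a phi j s + -1 * tvkr_rhs m omega a theta j s).

Lemma udiff m omega a phi theta i j : is_solution m omega a phi -> is_solution m omega a theta ->
  (i < m)%nat -> (j < m)%nat -> forall x y, 0 <= x <= y ->
  exists pr : Riemann_integrable (gg m omega a phi theta i j) x y,
    uu phi theta i j y - uu phi theta i j x = RiemannInt pr.
Proof. intros Hp Ht Hi Hj x y Hxy.
 destruct (sol_diff m omega a phi i Hp Hi x y Hxy) as [p1 E1].
 destruct (sol_diff m omega a theta i Ht Hi x y Hxy) as [p2 E2].
 destruct (sol_diff m omega a phi j Hp Hj x y Hxy) as [p3 E3].
 destruct (sol_diff m omega a theta j Ht Hj x y Hxy) as [p4 E4].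
 pose (p12 := RiemannInt_P10 (-1) p1 p2). pose (p34 := RiemannInt_P10 (-1) p3 p4).
 pose (pr := RiemannInt_P10 (-1) p12 p34).
 exists pr.
 assert (V1 : RiemannInt p12 = RiemannInt p1 + -1 * RiemannInt p2) by exact (RiemannInt_P13 p1 p2 p12).
 assert (V2 : RiemannInt p34 = RiemannInt p3 + -1 * RiemannInt p4) by exact (RiemannInt_P13 p3 p4 p34).
 assert (V : RiemannInt pr = RiemannInt p12 + -1 * RiemannInt p34) by exact (RiemannInt_P13 p12 p34 pr).
 assert (G : uu phi theta i j y - uu phi theta i j x = RiemannInt p12 + -1 * RiemannInt p34).
 { rewrite V1, V2. unfold uu. rewrite <- E1, <- E2, <- E3, <- E4. ring. }
 rewrite G. exact (eq_sym V). Qed.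

Lemma rhs_diff_bound m omega a phi theta i s B : 0 <= B ->
  (forall k, (k < m)%nat -> Rabs (a i k s) <= B) ->
  Rabs (tvkr_rhs m omega a phi i s + -1 * tvkr_rhs m omega a theta i s) <= INR m * (2 * B).
Proof. intros HB Ha. unfold tvkr_rhs.
 replace (omega i s + sumR (map (fun j => a i j s * sin (phi j s - phi i s)) (seq 0 m)) +
   -1 * (omega i s + sumR (map (fun j => a i j s * sin (theta j s - theta i s)) (seq 0 m))))
 with (sumR (map (fun j => a i j s * sin (phi j s - phi i s)) (seq 0 m)) -
       sumR (map (fun j => a i j s * sin (theta j s - theta i s)) (seq 0 m))) by ring.
 rewrite sumR_sub. rewrite <- (length_seq m 0) at 2. apply sumR_abs.
 intros k Hk. apply in_seq in Hk. specialize (Ha k ltac:(lia)).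
 rewrite <- Rmult_minus_distr_l, Rabs_mult.
 assert (Rabs (sin (phi k s - phi i s) - sin (theta k s - theta i s)) <= 2).
 { eapply Rle_trans. apply Rabs_triang. rewrite Rabs_Ropp.
   pose proof (SIN_bound (phi k s - phi i s)); pose proof (SIN_bound (theta k s - theta i s)).
   assert (Rabs (sin (phi k s - phi i s)) <= 1) by (apply Rabs_le; lra).
   assert (Rabs (sin (theta k s - theta i s)) <= 1) by (apply Rabs_le; lra). lra. }
 pose proof (Rabs_pos (a i k s)). pose proof (Rabs_pos (sin (phi k s - phi i s) - sin (theta k s - theta i s))). nra. Qed.

Lemma gg_bound m omega a phi theta i j s B : 0 <= B -> (i < m)%nat -> (j < m)%nat ->
  (forall k l, (k < m)%nat -> (l < m)%nat -> Rabs (a k l s) <= B) ->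
  Rabs (gg m omega a phi theta i j s) <= 4 * B * INR m.
Proof. intros HB Hi Hj Ha. unfold gg.
 pose proof (rhs_diff_bound m omega a phi theta i s B HB (fun k Hk => Ha i k Hi Hk)).
 pose proof (rhs_diff_bound m omega a phi theta j s B HB (fun k Hk => Ha j k Hj Hk)).
 eapply Rle_trans. apply Rabs_triang. rewrite Rabs_mult. replace (Rabs (-1)) with 1 by (unfold Rabs; destruct Rcase_abs; lra). lra. Qed.

Lemma u_lip m omega a phi theta i j B : is_solution m omega a phi -> is_solution m omega a theta ->
  (i < m)%nat -> (j < m)%nat -> 0 <= B ->
  (forall k l s, (k < m)%nat -> (l < m)%nat -> 0 <= s -> Rabs (a k l s) <= B) ->
  forall x y, 0 <= x <= y -> Rabs (uu phi theta i j y - uu phi theta i j x) <= 4 * B * INR m * (y - x).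
Proof. intros Hp Ht Hi Hj HB Ha x y Hxy. destruct (udiff m omega a phi theta i j Hp Ht Hi Hj x y Hxy) as [pr E].
 rewrite E. apply int_abs_const. lra. intros s Hs. apply gg_bound; auto. intros; apply Ha; auto; lra. Qed.

Lemma in_all_pairs m k l : (k < m)%nat -> (l < m)%nat -> In (k, l) (all_pairs m).
Proof. intros. unfold all_pairs. apply in_flat_map. exists k. split. apply in_seq; lia.
 apply in_map. apply in_seq; lia. Qed.

Lemma in_all_pairs_inv m p : In p (all_pairs m) -> (fst p < m)%nat /\ (snd p < m)%nat.
Proof. unfold all_pairs. intros H. apply in_flat_map in H. destruct H as [i [Hi H]].
 apply in_map_iff in H. destruct H as [j [<- Hj]]. apply in_seq in Hi; apply in_seq in Hj. simpl; lia. Qed.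

Lemma prod_abs_le (p q P Q : R) : Rabs p <= P -> Rabs q <= Q -> p * q <= P * Q.
Proof. intros H1 H2. eapply Rle_trans. apply Rle_abs. rewrite Rabs_mult.
 apply Rmult_le_compat; auto; apply Rabs_pos. Qed.

Lemma PD_all m r th s : 0 <= r -> PD_in m r th s ->
  forall k l, (k < m)%nat -> (l < m)%nat -> Rabs (th k s - th l s) <= r.
Proof. intros Hr H k l Hk Hl. destruct (Nat.lt_trichotomy k l) as [H1|[H1|H1]].
 - rewrite Rabs_minus_sym. apply H; lia.
 - subst. replace (th l s - th l s) with 0 by ring. rewrite Rabs_R0; auto.
 - apply H; lia. Qed.

Theorem theorem2 (m : nat) (omega : nat -> R -> R) (a : nat -> nat -> R -> R) (r : R) :
  (2 <= m)%nat ->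
  (forall i, (i < m)%nat -> piecewise_continuous (omega i) /\ bounded_on_nonneg (omega i)) ->
  (forall i j, (i < m)%nat -> (j < m)%nat ->
     piecewise_continuous (a i j) /\ bounded_on_nonneg (a i j)) ->
  (forall i t, (i < m)%nat -> a i i t = 0) ->
  0 <= r < PI / 2 ->
  invariant_Ar m omega a r ->
  (exists T eta, 0 < T /\ 0 < eta /\
     forall t, 0 <= t ->
       exists pr : Riemann_integrable (xi m a r) t (t + T),
         / T * RiemannInt pr <= - eta) ->
  PD_exp_stable m omega a r.
Proof.
 intros Hm Hom Ha Hdiag Hr Hinv [T [eta [HT [Heta Hwin]]]].
 assert (HB : exists B, 0 <= B /\ forall k l s, (k < m)%nat -> (l < m)%nat -> 0 <= s -> Rabs (a k l s) <= B).
 { assert (Hin : forall k, (k < m)%nat -> exists B, forall l s, (l < m)%nat -> 0 <= s -> Rabs (a k l s) <= B).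
   { intros k Hk.
     assert (M2 : forall l B0 B1, (forall s, 0 <= s -> Rabs (a k l s) <= B0) -> B0 <= B1 -> (forall s, 0 <= s -> Rabs (a k l s) <= B1)).
     { intros l B0 B1 H HBB s Hs. eapply Rle_trans; [apply H; auto| auto]. }
     assert (E2 : forall l, (l < m)%nat -> exists B, forall s, 0 <= s -> Rabs (a k l s) <= B).
     { intros l Hl. destruct (Ha k l Hk Hl) as [_ [Bkl HBkl]]. exists Bkl; auto. }
     destruct (finite_bound m _ M2 E2) as [B' [_ H']]. exists B'. intros l s Hl Hs. apply H'; auto. }
   assert (M1 : forall k B B', (forall l s, (l < m)%nat -> 0 <= s -> Rabs (a k l s) <= B) -> B <= B' ->
       (forall l s, (l < m)%nat -> 0 <= s -> Rabs (a k l s) <= B')).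
   { intros k B B' H HBB l s Hl Hs. eapply Rle_trans; [apply H; auto| auto]. }
   destruct (finite_bound m _ M1 Hin) as [B [HB0 HB]].
   exists B. split; [auto|]. intros k l s Hk Hl Hs. apply HB; auto. }
 destruct HB as [B [HB0 HBa]].
 set (X := 2 * B + B * INR m).
 assert (HX0 : 0 <= X) by (unfold X; pose proof (pos_INR m); nra).
 assert (Hxi : forall s, 0 <= s -> Rabs (xi m a r s) <= X).
 { intros s Hs. apply xi_bound; auto. }
 pose (HW := fun t (Ht : 0 <= t) => proj1_sig (constructive_indefinite_description _ (Hwin t Ht))).
 destruct (Phi_exists (xi m a r) T HW HT) as [Phi HPhi].
 assert (HPhiL : forall x y, 0 <= x <= y -> Rabs (Phi y - Phi x) <= X * (y - x)).
 { intros x y Hxy. rewrite (HPhi x y Hxy (RI_all _ T HW HT x y Hxy)). apply int_abs_const. lra.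
   intros s Hs; apply Hxi; lra. }
 assert (Hwin' : forall t, 0 <= t -> Phi (t + T) - Phi t <= - eta * T).
 { intros t Ht. destruct (Hwin t Ht) as [pr Hpr]. rewrite (HPhi t (t + T) ltac:(lra) pr).
   replace (RiemannInt pr) with (T * (/ T * RiemannInt pr)) by (field; lra). nra. }
 assert (Hlong : forall t, 0 <= t -> Phi t - Phi 0 <= - eta * t + (eta + X) * T).
 { assert (Hn : forall n : nat, forall t, 0 <= t <= INR n * T -> Phi t - Phi 0 <= - eta * t + (eta + X) * T).
   { intros n; induction n as [|n IH]; intros t Ht.
     - simpl in Ht. assert (t = 0) by lra. subst. replace (Phi 0 - Phi 0) with 0 by ring. nra.
     - destruct (Rle_dec t T).
       + pose proof (HPhiL 0 t ltac:(lra)). apply Rabs_le_inv in H. nra.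
       + rewrite S_INR in Ht. pose proof (IH (t - T) ltac:(lra)).
         pose proof (Hwin' (t - T) ltac:(lra)). replace (t - T + T) with t in H0 by ring. nra. }
   intros t Ht. destruct (INR_archimed T t HT) as [n Hn']. apply (Hn n). lra. }
 exists (exp ((eta + X) * T)), 1, eta. split; [apply exp_pos|]. split; [lra|]. split; [lra|].
 intros phi theta Hp Ht Hp0 Ht0 t Ht1 i j Hi Hj.
 assert (Hpr : forall s, 0 <= s -> forall k l, (k < m)%nat -> (l < m)%nat -> Rabs (phi k s - phi l s) <= r).
 { intros s Hs. apply PD_all. lra. apply Hinv; auto. }
 assert (Htr : forall s, 0 <= s -> forall k l, (k < m)%nat -> (l < m)%nat -> Rabs (theta k s - theta l s) <= r).
 { intros s Hs. apply PD_all. lra. apply Hinv; auto. }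
 set (D := fun s => listMax (map (fun p : nat * nat => Rabs (uu phi theta (fst p) (snd p) s)) (all_pairs m))).
 assert (HDge : forall s k l, (k < m)%nat -> (l < m)%nat -> Rabs (uu phi theta k l s) <= D s).
 { intros s k l Hk Hl. unfold D. apply listMax_ge. apply (in_map (fun p : nat * nat => Rabs (uu phi theta (fst p) (snd p) s)) _ (k, l)).
   apply in_all_pairs; auto. }
 assert (HDpos : forall s, 0 <= D s).
 { intros s. eapply Rle_trans; [apply Rabs_pos| apply (HDge s 0%nat 0%nat); lia]. }
 assert (HDatt : forall s, exists k l, (k < m)%nat /\ (l < m)%nat /\ D s = Rabs (uu phi theta k l s)).
 { intros s. assert (Hne : map (fun p : nat * nat => Rabs (uu phi theta (fst p) (snd p) s)) (all_pairs m) <> []).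
   { intros E. assert (Hin := in_all_pairs m 0 0 ltac:(lia) ltac:(lia)).
     apply (in_map (fun p : nat * nat => Rabs (uu phi theta (fst p) (snd p) s))) in Hin. rewrite E in Hin. destruct Hin. }
   pose proof (listMax_in _ Hne) as Hin. apply in_map_iff in Hin. destruct Hin as [p [Ep Hp']].
   apply in_all_pairs_inv in Hp'. exists (fst p), (snd p). split; [tauto|]. split; [tauto|]. unfold D. auto. }
 set (L := 4 * B * INR m).
 assert (HL0 : 0 <= L) by (unfold L; pose proof (pos_INR m); nra).
 assert (Hlip : forall k l x y, (k < m)%nat -> (l < m)%nat -> 0 <= x <= y ->
            Rabs (uu phi theta k l y - uu phi theta k l x) <= L * (y - x)).
 { intros k l x y Hk Hl Hxy. apply (u_lip m omega a phi theta k l B); auto. }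
 set (C := (Kc m B + X) * L + L * X).
 assert (HC0 : 0 <= C).
 { unfold C, Kc. pose proof (pos_INR m). assert (0 <= Kc m B) by (unfold Kc; nra). unfold Kc in H0. nra. }
 assert (Hstep : forall x y, 0 <= x <= y -> 0 < D y ->
   D y <= D x + D x * (Phi y - Phi x) + C * ((y - x) * (y - x))).
 { intros x y Hxy HDy.
   assert (Hij : exists i j, (i < m)%nat /\ (j < m)%nat /\ uu phi theta i j y = D y).
   { destruct (HDatt y) as [k [l [Hk [Hl Ek]]]]. destruct (Rle_dec 0 (uu phi theta k l y)).
     - exists k, l. rewrite Rabs_right in Ek by lra. auto.
     - exists l, k. rewrite Rabs_left in Ek by lra. split; [auto|]. split; [auto|]. rewrite Ek. unfold uu; ring. }
   clear i j Hi Hj. destruct Hij as [i [j [Hi [Hj Eij]]]].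
   assert (Hne : i <> j). { intros <-. unfold uu in Eij. lra. }
   assert (Hmx : forall q, (q < m)%nat -> uu phi theta q i y <= 0).
   { intros q Hq. pose proof (HDge y q j Hq Hj). pose proof (Rle_abs (uu phi theta q j y)).
     replace (uu phi theta q i y) with (uu phi theta q j y - uu phi theta i j y) by (unfold uu; ring). lra. }
   assert (Hmn : forall q, (q < m)%nat -> uu phi theta j q y <= 0).
   { intros q Hq. pose proof (HDge y i q Hi Hq). pose proof (Rle_abs (uu phi theta i q y)).
     replace (uu phi theta j q y) with (uu phi theta i q y - uu phi theta i j y) by (unfold uu; ring). lra. }
   set (h := y - x).
   assert (Hh : 0 <= h) by (unfold h; lra).
   destruct (udiff m omega a phi theta i j Hp Ht Hi Hj x y Hxy) as [pr Epr].
   set (c := (Kc m B + X) * L * h).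
   set (prx := RI_all _ T HW HT x y Hxy).
   pose (pr2 := RiemannInt_P10 (D y) (RiemannInt_P14 x y c) prx).
   assert (Hle : RiemannInt pr <= RiemannInt pr2).
   { apply RiemannInt_P19. lra. intros s Hs. unfold fct_cte.
     assert (Hs0 : 0 <= s) by lra.
     assert (Hpt := pointwise m omega a r B phi theta s (L * h) i j Hr HB0
       (fun k l Hk Hl => HBa k l s Hk Hl Hs0) (fun k Hk => Hdiag k s Hk)
       (Hpr s Hs0) (Htr s Hs0) Hi Hj Hne ltac:(nra)).
     assert (A1 : forall q, (q < m)%nat -> (phi q s - theta q s) - (phi i s - theta i s) <= L * h).
     { intros q Hq. pose proof (Hlip q i s y Hq Hi ltac:(lra)). apply Rabs_le_inv in H.
       pose proof (Hmx q Hq). unfold uu in *. unfold h. nra. }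
     assert (A2 : forall q, (q < m)%nat -> (phi j s - theta j s) - (phi q s - theta q s) <= L * h).
     { intros q Hq. pose proof (Hlip j q s y Hj Hq ltac:(lra)). apply Rabs_le_inv in H.
       pose proof (Hmn q Hq). unfold uu in *. unfold h. nra. }
     specialize (Hpt A1 A2).
     assert (A3 : xi m a r s * (uu phi theta i j s - D y) <= X * (L * h)).
     { apply prod_abs_le. auto. rewrite <- Eij, Rabs_minus_sym. eapply Rle_trans. apply Hlip; auto; lra.
       unfold h. apply Rmult_le_compat_l; lra. }
     unfold gg. unfold uu in A3. unfold c. nra. }
   assert (V : RiemannInt pr2 = RiemannInt (RiemannInt_P14 x y c) + D y * RiemannInt prx)
     by exact (RiemannInt_P13 _ _ pr2).
   rewrite RiemannInt_P15 in V. rewrite <- (HPhi x y Hxy prx) in V. rewrite <- Epr in Hle.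
   assert (Hux : uu phi theta i j x <= D x) by (eapply Rle_trans; [apply Rle_abs| apply HDge; auto]).
   assert (Hd1 : D y - D x <= L * h).
   { pose proof (Hlip i j x y Hi Hj Hxy). apply Rabs_le_inv in H. unfold h. lra. }
   assert (Hd2 : D x - D y <= L * h).
   { destruct (HDatt x) as [k [l [Hk [Hl Ek]]]]. pose proof (Hlip k l x y Hk Hl Hxy).
     pose proof (HDge y k l Hk Hl). rewrite Ek. unfold h.
     pose proof (Rabs_triang_inv (uu phi theta k l x) (uu phi theta k l y)).
     rewrite Rabs_minus_sym in H. lra. }
   assert (HP := HPhiL x y Hxy). fold h in HP.
   assert (Hprod : (D y - D x) * (Phi y - Phi x) <= (L * h) * (X * h)).
   { apply prod_abs_le; auto. apply Rabs_le; lra. }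
   unfold c in V. fold h in V. replace (y - x) with h in V by reflexivity. rewrite Eij in Hle. assert (E3 : D y * (Phi y - Phi x) = D x * (Phi y - Phi x) + (D y - D x) * (Phi y - Phi x)) by ring. assert (E4 : ((Kc m B + X) * L + L * X) * (h * h) = (Kc m B + X) * L * h * h + L * h * (X * h)) by ring. unfold C; fold h; rewrite E4. assert (Hle2 : D y - uu phi theta i j x <= (Kc m B + X) * L * h * h + D y * (Phi y - Phi x)) by (rewrite <- V; exact Hle). lra. }
 assert (Hcmp := comparison D Phi X C t HX0 HC0 ltac:(lra) (fun s _ => HDpos s)
    (fun x y Hxy => proj2 (Rabs_le_inv _ _ (HPhiL x y Hxy))) Hstep).
 assert (HD0 : D 0 = init_PD_dist m phi theta) by reflexivity.
 eapply Rle_trans. apply (HDge t i j Hi Hj). eapply Rle_trans. apply Hcmp.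
 rewrite HD0. assert (Hi0 : 0 <= init_PD_dist m phi theta) by (rewrite <- HD0; auto).
 replace (exp ((eta + X) * T) * init_PD_dist m phi theta * exp (- eta * t)) with
   (init_PD_dist m phi theta * exp (- eta * t + (eta + X) * T)) by (rewrite exp_plus; ring).
 apply Rmult_le_compat_l; auto. apply exp_mono. apply Hlong; lra.
Qed.
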